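(* Let $S$ be a semibounded relation in $\mathfrak H$ with lower bound $\gamma\in\mathbb R$, let $c\le\gamma$, let $Q_c$ be a representing map for $\mathfrak t(S)-c$ and $J_c$ its companion relation. Then: (1) $\mathrm{mul}\,J_c=\mathrm{ran}\,(S-c)\cap\mathrm{mul}\,S^*$. (2) $\psi'\in\mathrm{mul}\,J_c^{**}$ if and only if there is a sequence $\{\varphi_n,\varphi_n'\}\in S$ with $\varphi_n'-c\varphi_n\to\psi'$ and $(\varphi_n'-c\varphi_n,\varphi_n)\to0$. (3) $\psi'\in\mathrm{dom}\,J_c^*$ if and only if there is $C_{\psi'}<\infty$ such that $|(\varphi',\psi')|^2\le C_{\psi'}(\varphi',\varphi)$ for all $\{\varphi,\varphi'\}\in S-c$.
   Context: Linear relations are linear subspaces $T\subset\mathfrak H\times\mathfrak K$ with $\mathrm{dom}\,T$, $\mathrm{ran}\,T$, $\mathrm{mul}\,T=\{g:\{0,g\}\in T\}$; $T^*=\{\{h,k\}\in\mathfrak K\times\mathfrak H:(k,f)=(h,g)\ \forall\{f,g\}\in T\}$; $T^{**}$ is the closure; $S-c=\{\{f,g-cf\}:\{f,g\}\in S\}$. $S$ is semibounded with lower bound $\gamma$ if $\gamma$ is the supremum of all $c$ with $(\varphi',\varphi)\ge c\|\varphi\|^2$ for all $\{\varphi,\varphi'\}\in S$. The form $\mathfrak t(S)[\varphi,\psi]=(\varphi',\psi)$ on $\mathrm{dom}\,S$. A representing map for $\mathfrak t(S)-c$ is a linear operator $Q_c$ from $\mathfrak H$ to a Hilbert space $\mathfrak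 K_c$ with $\mathrm{dom}\,Q_c=\mathrm{dom}\,S$ and $\mathfrak t(S)[\varphi,\psi]=c(\varphi,\psi)+(Q_c\varphi,Q_c\psi)$. Its companion relation is $J_c=\{\{Q_c\varphi,\varphi'-c\varphi\}:\{\varphi,\varphi'\}\in S\}\subset\mathfrak K_c\times\mathfrak H$. *)

(* Defs.v *)
From HB Require Import structures.
From mathcomp Require Import all_boot all_order all_algebra.
From mathcomp Require Import boolp classical_sets reals.
From mathcomp Require Import complex.
Set Implicit Arguments. Unset Strict Implicit. Unset Printing Implicit Defensive.
Import Order.TTheory GRing.Theory Num.Theory.
Local Open Scope ring_scope.
Local Open Scope classical_set_scope.

Section Hilbert.
Variable R : realType.
Local Notation C := R[i].

Definition hnorm (V : lmodType C) (ip : V -> V -> C) (x : V) : R :=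
  Num.sqrt (complex.Re (ip x x)).

Definition hcvg (V : lmodType C) (ip : V -> V -> C) (u : nat -> V) (l : V) :=
  forall eps : R, 0 < eps -> exists N : nat, forall n, (N <= n)%N ->
    hnorm ip (u n - l) < eps.

Definition hcauchy (V : lmodType C) (ip : V -> V -> C) (u : nat -> V) :=
  forall eps : R, 0 < eps -> exists N : nat, forall n m, (N <= n)%N -> (N <= m)%N ->
    hnorm ip (u n - u m) < eps.

Definition ccvg (u : nat -> C) (l : C) :=
  forall eps : R, 0 < eps -> exists N : nat, forall n, (N <= n)%N ->
    `|u n - l| < eps%:C%C.

Record is_hilbert (V : lmodType C) (ip : V -> V -> C) : Prop := {
  ip_conj : forall x y, ip y x = (ip x y)^*;
  ip_linear : forall (a : C) x y z, ip (a *: x + y) z = a * ip x z + ip y z;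
  ip_ge0 : forall x, 0 <= ip x x;
  ip_eq0 : forall x, ip x x = 0 -> x = 0;
  ip_complete : forall u, hcauchy ip u -> exists l, hcvg ip u l
}.

Definition linrel (H K : lmodType C) (T : set (H * K)) : Prop :=
  T (0, 0) /\ forall (a : C) f g f' g', T (f, g) -> T (f', g') ->
    T (a *: f + f', a *: g + g').

Definition lr_dom (H K : Type) (T : set (H * K)) : set H :=
  [set f | exists g, T (f, g)].
Definition lr_ran (H K : Type) (T : set (H * K)) : set K :=
  [set g | exists f, T (f, g)].
Definition lr_mul (H K : lmodType C) (T : set (H * K)) : set K :=
  [set g | T (0, g)].

Definition lr_adj (H K : lmodType C) (ipH : H -> H -> C) (ipK : K -> K -> C)
  (T : set (H * K)) : set (K * H) :=
  [set hk | forall f g, T (f, g) -> ipH hk.2 f = ipK hk.1 g].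

Definition lr_shift (H : lmodType C) (S : set (H * H)) (c : R) : set (H * H) :=
  [set fg | exists f g, S (f, g) /\ fg = (f, g - c%:C%C *: f)].

Definition lb_set (H : lmodType C) (ip : H -> H -> C) (S : set (H * H)) : set R :=
  [set c | forall f g, S (f, g) -> c%:C%C * ip f f <= ip g f].

Definition semibounded_lb (H : lmodType C) (ip : H -> H -> C) (S : set (H * H))
  (gamma : R) : Prop :=
  (forall c, lb_set ip S c -> c <= gamma) /\
  (forall b, (forall c, lb_set ip S c -> c <= b) -> gamma <= b).

(* Q (defined on dom S) is a representing map for t(S) - c *)
Definition representing_map (H K : lmodType C) (ipH : H -> H -> C)
  (ipK : K -> K -> C) (S : set (H * H)) (c : R) (Q : H -> K) : Prop :=
  (forall (a : C) x y, lr_dom S x -> lr_dom S y -> Q (a *: x + y) = a *: Q x + Q y) /\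
  (forall f g h, S (f, g) -> lr_dom S h ->
     ipH g h = c%:C%C * ipH f h + ipK (Q f) (Q h)).

Definition companion (H K : lmodType C) (S : set (H * H)) (c : R) (Q : H -> K)
  : set (K * H) :=
  [set kh | exists f g, S (f, g) /\ kh = (Q f, g - c%:C%C *: f)].

End Hilbert.

(* Main.v *)
Require Import Defs.
From HB Require Import structures.
From mathcomp Require Import all_boot all_order all_algebra.
From mathcomp Require Import boolp classical_sets reals.
From mathcomp Require Import complex.
From mathcomp Require Import ring lra.
Import Order.TTheory GRing.Theory Num.Theory.
Local Open Scope ring_scope.
Set Implicit Arguments. Unset Strict Implicit. Unset Printing Implicit Defensive.


Section Cx.
Variable R : realType.
Local Notation C := R[i].
Definition sq (z : C) : R := complex.Re z ^+ 2 + complex.Im z ^+ 2.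

Lemma sqE (z : C) : z * z^* = (sq z)%:C%C.
Proof.
case: z => a b; rewrite /sq /=; apply/eqP; rewrite eq_complex /=.
by apply/andP; split; apply/eqP; ring.
Qed.
Lemma sq_ge0 z : 0 <= sq z.
Proof. rewrite /sq; nra. Qed.
Lemma sq_conj z : sq z^* = sq z.
Proof. by case: z => a b; rewrite /sq /= sqrrN. Qed.
Lemma sq_eq0 z : sq z = 0 -> z = 0.
Proof.
case: z => a b; rewrite /sq /= => h.
have ha : a = 0 by nra.
have hb : b = 0 by nra.
by rewrite ha hb.
Qed.
Lemma sq_add z w : sq (z + w) <= 2 * sq z + 2 * sq w.
Proof. case: z => a b; case: w => c d; rewrite /sq /=.
have := sqr_ge0 (a - c); have := sqr_ge0 (b - d); nra. Qed.
Lemma sqN z : sq (- z) = sq z.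
Proof. by case: z => a b; rewrite /sq /= !sqrrN. Qed.
Lemma sq_real (r : R) : sq r%:C%C = r ^+ 2.
Proof. by rewrite /sq /= expr0n /= addr0. Qed.
Lemma Re_sq z : complex.Re z ^+ 2 <= sq z.
Proof. rewrite /sq; nra. Qed.
Lemma sq_mul z w : sq (z * w) = sq z * sq w.
Proof. case: z => a b; case: w => c d; rewrite /sq /=; ring. Qed.
Lemma normC_sq z : `|z| ^+ 2 = (sq z)%:C%C.
Proof. by rewrite -add_Re2_Im2. Qed.
Lemma normC_lt z (e : R) : 0 < e -> (`|z| < e%:C%C) = (sq z < e ^+ 2).
Proof.
move=> he; rewrite normc_def ltcR -/(sq z).
apply/idP/idP => h.
  have h0 : 0 <= Num.sqrt (sq z) by apply: sqrtr_ge0.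
  have := sqr_sqrtr (sq_ge0 z); move=> <-. nra.
rewrite -(ltr_pXn2r (n:=2)) //; last by rewrite nnegrE ltW.
  by rewrite sqr_sqrtr ?sq_ge0.
by rewrite nnegrE sqrtr_ge0.
Qed.
End Cx.
Section Gen.
Variables (R : realType) (V : lmodType R[i]) (ip : V -> V -> R[i]).
Hypothesis hV : is_hilbert ip.
Local Notation C := R[i].
Definition n2 x := complex.Re (ip x x).

Lemma ipD x y z : ip (x + y) z = ip x z + ip y z.
Proof. by have := ip_linear hV 1 x y z; rewrite scale1r mul1r. Qed.
Lemma ip0l z : ip 0 z = 0.
Proof.
have h := ipD 0 0 z; rewrite addr0 in h.
by apply: (addrI (ip 0 z)); rewrite addr0 -h.
Qed.
Lemma ipZ a x z : ip (a *: x) z = a * ip x z.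
Proof. by have := ip_linear hV a x 0 z; rewrite !addr0 ip0l addr0. Qed.
Lemma ipN x z : ip (- x) z = - ip x z.
Proof. by rewrite -scaleN1r ipZ mulN1r. Qed.
Lemma ipB x y z : ip (x - y) z = ip x z - ip y z.
Proof. by rewrite ipD ipN. Qed.
Lemma ipC x y : ip x y = (ip y x)^*.
Proof. exact: ip_conj. Qed.
Lemma ipD2 x y z : ip z (x + y) = ip z x + ip z y.
Proof. by rewrite ipC ipD rmorphD /= -!ipC. Qed.
Lemma ipZ2 a x z : ip z (a *: x) = a^* * ip z x.
Proof. by rewrite ipC ipZ rmorphM /= -ipC. Qed.
Lemma ip0r z : ip z 0 = 0.
Proof. by rewrite ipC ip0l rmorph0. Qed.
Lemma ipN2 x z : ip z (- x) = - ip z x.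
Proof. by rewrite ipC ipN rmorphN /= -ipC. Qed.
Lemma ipB2 x y z : ip z (x - y) = ip z x - ip z y.
Proof. by rewrite ipD2 ipN2. Qed.

Lemma ipxx x : ip x x = (n2 x)%:C%C.
Proof.
rewrite /n2; have := ger0_Im (ip_ge0 hV x).
by case: (ip x x) => a b /= ->.
Qed.
Lemma n2_ge0 x : 0 <= n2 x.
Proof. by have := ip_ge0 hV x; rewrite ipxx ler0c. Qed.
Lemma n2_eq0 x : n2 x = 0 -> x = 0.
Proof. by move=> h; apply: (ip_eq0 hV); rewrite ipxx h. Qed.
Lemma n2_0 : n2 0 = 0.
Proof. by rewrite /n2 ip0l. Qed.
Lemma n2N x : n2 (- x) = n2 x.
Proof. by rewrite /n2 ipN ipN2 opprK. Qed.
Lemma n2_sym x y : n2 (x - y) = n2 (y - x).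
Proof. by rewrite -n2N opprB. Qed.

Lemma quad u y : 0 < n2 y ->
  n2 (u - (((n2 y)^-1)%:C%C * ip u y) *: y) = n2 u - sq (ip u y) / n2 y.
Proof.
move=> hy; set N := n2 y; set b := ip u y; set r := N^-1.
have e : ip (u - ((r%:C%C * b) *: y)) (u - ((r%:C%C * b) *: y)) =
   (n2 u)%:C%C - r%:C%C * (b * b^*) - r%:C%C * (b * b^*) + r%:C%C * r%:C%C * (b * b^*) * N%:C%C.
  rewrite ipB ipB2 ipB2. idtac. rewrite ipZ ipZ2. idtac. rewrite ipZ ipZ2. idtac. rewrite ipxx (ipxx y) -/N -/b.
  rewrite [ip y u]ipC -/b.
  rewrite rmorphM /=.
  have -> : Num.conj r%:C%C = r%:C%C by apply/eqP; rewrite eq_complex /= oppr0 !eqxx.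
  ring.
rewrite /n2 in e *; rewrite e sqE.
have hN : N%:C%C != 0 :> C by rewrite eq_complex /= negb_and gt_eqF.
rewrite -!rmorphM -!rmorphB /=.
rewrite /r; field; exact: lt0r_neq0.
Qed.
End Gen.
Lemma small0 (R : realType) (a : R) : 0 <= a -> (forall e, 0 < e -> a <= e) -> a = 0.
Proof.
move=> ha h; apply/eqP; rewrite eq_le ha andbT; apply/negP => /negP.
rewrite -ltNge => hp; have := h (a / 2) (divr_gt0 hp (ltr0Sn _ 1)); lra.
Qed.

Lemma lt_sqrt (R : realType) (a e : R) : 0 <= a -> 0 < e -> (Num.sqrt a < e) = (a < e ^+ 2).
Proof.
move=> ha he; apply/idP/idP => h.
  have h0 : 0 <= Num.sqrt a by apply: sqrtr_ge0.
  have := sqr_sqrtr ha; move=> <-. nra.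
rewrite -(ltr_pXn2r (n:=2)) //; last by rewrite nnegrE ltW.
  by rewrite sqr_sqrtr.
by rewrite nnegrE sqrtr_ge0.
Qed.

Section Gen2.
Variables (R : realType) (V : lmodType R[i]) (ip : V -> V -> R[i]).
Hypothesis hV : is_hilbert ip.
Local Notation n2 := (n2 ip).

Lemma CS x y : sq (ip x y) <= n2 x * n2 y.
Proof.
have [h0|hp] := eqVneq (n2 y) 0.
  rewrite (n2_eq0 hV h0) (ip0r hV) (n2_0 hV) mulr0 /sq /=; lra.
have hy : 0 < n2 y by rewrite lt0r hp n2_ge0.
have := n2_ge0 hV (x - (((n2 y)^-1)%:C%C * ip x y) *: y).
rewrite (quad hV) // subr_ge0 ler_pdivrMr //.
Qed.

Lemma hcvgE u l : hcvg ip u l <->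
  forall e, 0 < e -> exists N, forall n, (N <= n)%N -> n2 (u n - l) < e.
Proof.
split=> h e he.
  have hs : 0 < Num.sqrt e by rewrite sqrtr_gt0.
  have [N hN] := h _ hs.
  exists N => n /hN; rewrite /hnorm lt_sqrt ?n2_ge0 ?sqrtr_gt0 //.
  by rewrite sqr_sqrtr // ltW.
have [N hN] := h (e ^+ 2) (exprn_gt0 _ he).
by exists N => n /hN hn; rewrite /hnorm lt_sqrt ?n2_ge0.
Qed.

Lemma hcauchyE u : (forall e, 0 < e -> exists N, forall n m, (N <= n)%N -> (N <= m)%N ->
   n2 (u n - u m) < e) -> hcauchy ip u.
Proof.
move=> h e he; have [N hN] := h (e ^+ 2) (exprn_gt0 _ he).
by exists N => n m hn hm; rewrite /hnorm lt_sqrt ?n2_ge0 ?hN.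
Qed.

Lemma lim_orth w p q : hcvg ip w p -> (forall n, ip (w n) q = 0) -> ip p q = 0.
Proof.
move=> /hcvgE hw hq; apply: sq_eq0; apply: small0; first exact: sq_ge0.
move=> e he.
have [h0|hp] := eqVneq (n2 q) 0.
  by rewrite (n2_eq0 hV h0) (ip0r hV) /sq /= expr0n /= addr0 ltW.
have hy : 0 < n2 q by rewrite lt0r hp n2_ge0.
have [N hN] := hw _ (divr_gt0 he hy).
have e1 : ip p q = - ip (w N - p) q by rewrite (ipB hV) hq sub0r opprK.
rewrite e1 sqN.
apply: le_trans (CS _ _) _.
have := hN N (leqnn N); rewrite ltr_pdivlMr // => h; exact: ltW.
Qed.
End Gen2.
Lemma archN (R : realType) (e : R) : 0 < e -> exists N, forall n, (N <= n)%N -> (n.+1%:R)^-1 < e.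
Proof.
move=> he; exists (Num.bound e^-1) => n hn.
have h0 : 0 <= e^-1 by rewrite invr_ge0 ltW.
have h1 := archi_boundP h0.
have h2 : (Num.bound e^-1)%:R <= n.+1%:R :> R by rewrite ler_nat (leq_trans hn).
rewrite invf_plt ?posrE //; exact: lt_le_trans h1 h2.
Qed.

Section Gen3.
Variables (R : realType) (V : lmodType R[i]) (ip : V -> V -> R[i]).
Hypothesis hV : is_hilbert ip.
Local Notation n2 := (n2 ip).
Local Notation C := R[i].

Lemma para a b : n2 (a - b) + n2 (a + b) = 2 * n2 a + 2 * n2 b.
Proof.
apply: complexI; rewrite !rmorphD !rmorphM /= -!(ipxx hV).
rewrite !(ipB hV, ipD hV, ipB2 hV, ipD2 hV, ipN hV, ipN2 hV).
have -> : (2 : R)%:C%C = 2 :> C by rewrite rmorph_nat.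
ring.
Qed.

Lemma n2Z c z : n2 (c *: z) = sq c * n2 z.
Proof.
apply: complexI; rewrite rmorphM /= -!(ipxx hV) (ipZ hV) (ipZ2 hV) -sqE; ring.
Qed.

Lemma proj (M : set V) : M 0 -> (forall a x y, M x -> M y -> M (a *: x + y)) ->
  forall x, exists m : nat -> V, exists p, (forall n, M (m n)) /\ hcvg ip m p /\
    (forall y, M y -> ip (x - p) y = 0).
Proof.
move=> M0 Ml x.
have Mz a y : M y -> M (a *: y) by move=> hy; have := Ml a y 0 hy M0; rewrite addr0.
pose D : set R := (fun r => exists m, M m /\ r = n2 (x - m)).
have Dn : (D !=set0)%classic by exists (n2 (x - 0)); exists 0.
have Dl : has_lbound D by exists (0:R) => r [m [_ ->]]; exact: (n2_ge0 hV (x - m)).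
set d := inf D.
have dle m : M m -> d <= n2 (x - m) by move=> hm; apply: (ge_inf Dl); exists m.
have ad n : exists m, M m /\ n2 (x - m) < d + (n.+1%:R)^-1.
  have hi : 0 < (n.+1%:R : R)^-1 by rewrite invr_gt0 ltr0Sn.
  have [r [m [hm ->]] hr] := inf_adherent hi (conj Dn Dl).
  by exists m.
case: (choice ad) => m hm.
have cau i j : n2 (m i - m j) <= 2 * (i.+1%:R)^-1 + 2 * (j.+1%:R)^-1.
  set c : C := (2^-1 : R)%:C%C.
  have hmid : M (c *: m i + c *: m j) by apply: Ml; [apply hm | apply: Mz; apply hm].
  have := dle _ hmid.
  have h2 : (2^-1 + 2^-1 : R) = 1 by field.
  have hc : c + c = 1 by rewrite /c -rmorphD h2 rmorph1.
  have e1 : x - (c *: m i + c *: m j) = c *: ((x - m i) + (x - m j)).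
    by rewrite scalerDr !scalerBr addrACA -scalerDl hc scale1r opprD.
  rewrite e1 n2Z /c sq_real.
  have := para (x - m i) (x - m j).
  have -> : x - m i - (x - m j) = m j - m i by rewrite opprB addrC addrA subrK.
  rewrite [n2 (m j - m i)](n2_sym hV).
  have := (hm i).2; have := (hm j).2.
  have -> : (2^-1 : R) ^+ 2 = 4^-1 by field.
  move=> H1 H2 H3 H4.
  have H5 : 4 * d <= n2 (x - m i + (x - m j)) by rewrite -ler_pdivlMl // mulrC.
  have H6 : n2 (m i - m j) <= 2 * n2 (x - m i) + 2 * n2 (x - m j) - 4 * d by lra.
  have H7 : n2 (x - m i) - d < i.+1%:R^-1 by rewrite ltrBlDl.
  have H8 : n2 (x - m j) - d < j.+1%:R^-1 by rewrite ltrBlDl.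
  set ai := i.+1%:R^-1 in H7 *. set aj := j.+1%:R^-1 in H8 *.
  lra.
have hc : hcauchy ip m.
  apply: (hcauchyE hV) => e he.
  have he4 : 0 < e / 4 by rewrite divr_gt0.
  have [N hN] := archN he4.
  exists N => i j hi hj.
  have h1 := hN _ hi; have h2 := hN _ hj; have h3 := cau i j.
  set ai := i.+1%:R^-1 in h1 h3. set aj := j.+1%:R^-1 in h2 h3.
  lra.
have [p hp] := ip_complete hV hc.
exists m, p; split; first by move=> n; exact: (hm n).1.
split=> // y hy.
apply: sq_eq0; apply: small0; first exact: sq_ge0.
move=> e he.
have [h0|hnz] := eqVneq (n2 y) 0.
  by rewrite (n2_eq0 hV h0) (ip0r hV) /sq /= expr0n /= addr0 ltW.
set N := n2 y.
have hN : 0 < N by rewrite lt0r hnz n2_ge0.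
have bn n : sq (ip (x - m n) y) <= N * (n.+1%:R)^-1.
  set b := ip (x - m n) y.
  have hM : M (((N^-1)%:C%C * b) *: y + m n) by apply: Ml => //; exact: (hm n).1.
  have := dle _ hM.
  have -> : x - (((N^-1)%:C%C * b) *: y + m n) = (x - m n) - ((N^-1)%:C%C * b) *: y.
    by rewrite opprD addrA addrAC.
  rewrite (quad hV) // -/N -/b.
  have := (hm n).2.
  have hs : sq b / N * N = sq b by rewrite divfK // lt0r_neq0.
  set s := sq b / N in hs *.
  move=> h1 h2; rewrite -hs.
  set ai := n.+1%:R^-1 in h1 *.
  have hs' : s <= ai by lra.
  by rewrite [s * N]mulrC ler_pM2l.
have he4 : 0 < e / (4 * N) by rewrite divr_gt0 // mulr_gt0.
have [N1 hN1] := archN he4.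
have [N2 hN2] := (hcvgE hV m p).1 hp _ he4.
set n := maxn N1 N2.
have h1 := hN1 n (leq_maxl _ _).
have h2 := hN2 n (leq_maxr _ _).
have -> : x - p = (x - m n) + (m n - p) by rewrite addrA subrK.
rewrite (ipD hV).
apply: le_trans (sq_add _ _) _.
have h3 := bn n.
have h4 := CS hV (m n - p) y; rewrite -/N in h4.
rewrite ltr_pdivlMr ?mulr_gt0 // in h1.
rewrite ltr_pdivlMr ?mulr_gt0 // in h2.
set ai := n.+1%:R^-1 in h1 h3.
set q := n2 (m n - p) in h2 h4.
have e1 : ai * (4 * N) = 4 * (N * ai) by ring.
have e2 : q * (4 * N) = 4 * (q * N) by ring.
rewrite e1 in h1; rewrite e2 in h2.
set A := N * ai in h1 h3. set B := q * N in h2 h4.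
lra.
Qed.
End Gen3.
Section Gen4.
Variables (R : realType) (V : lmodType R[i]) (ip : V -> V -> R[i]).
Hypothesis hV : is_hilbert ip.
Local Notation n2 := (n2 ip).
Local Notation C := R[i].

Lemma riesz (P : set (V * C)) : P (0, 0) ->
  (forall a m c m' c', P (m, c) -> P (m', c') -> P (a *: m + m', a * c + c')) ->
  forall B : R, (forall m c, P (m, c) -> sq c <= B * n2 m) ->
  exists k, forall m c, P (m, c) -> ip m k = c.
Proof.
move=> P0 Pl B hB.
case: (pselect (exists m c, P (m, c) /\ c != 0)); last first.
  move=> hn; exists 0 => m c hmc; rewrite (ip0r hV).
  apply/eqP; rewrite eq_sym; apply/negP => hc; apply: hn; exists m, c; split=> //; exact/negP.
move=> [y0 [c0 [hy0 hc0]]].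
pose N : set V := fun m => P (m, 0).
have N0 : N 0 by [].
have Nl a x y : N x -> N y -> N (a *: x + y).
  by move=> hx hy; have := Pl a x 0 y 0 hx hy; rewrite mulr0 addr0.
have [m [p [hm [hp ho]]]] := proj hV N0 Nl y0.
set r := y0 - p.
have B1 : 0 < `|B| + 1 by rewrite ltr_wpDl.
have hB' z w : P (z, w) -> sq w <= (`|B| + 1) * n2 z.
  move=> hmc; apply: le_trans (hB _ _ hmc) _.
  have := n2_ge0 hV z; have := ler_norm B; nra.
have hr : 0 < n2 r.
  rewrite lt0r (n2_ge0 hV) andbT; apply/negP => /eqP h0.
  have hp0 : p = y0 by have := n2_eq0 hV h0; move/eqP; rewrite subr_eq0 => /eqP ->.
  move/negP: hc0; apply; apply/eqP; apply: sq_eq0; apply: small0; first exact: sq_ge0.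
  move=> e he.
  have [J hJ] := (hcvgE hV m p).1 hp _ (divr_gt0 he B1).
  have hP := Pl (-1) _ _ _ _ (hm J) hy0; rewrite mulr0 add0r scaleN1r addrC in hP.
  have := hB' _ _ hP; rewrite (n2_sym hV) -hp0.
  have := hJ J (leqnn J); rewrite ltr_pdivlMr // => h1 h2.
  apply: le_trans h2 _; rewrite mulrC; exact: ltW.
have hpr : ip p r = 0.
  apply: (lim_orth hV hp) => n.
  by rewrite (ipC hV) ho // rmorph0.
have hy0r : ip y0 r = (n2 r)%:C%C.
  have -> : y0 = p + r by rewrite /r addrC subrK.
  by rewrite (ipD hV) hpr add0r (ipxx hV).
have hrC : (n2 r)%:C%C != 0 :> C by rewrite eq_complex /= negb_and gt_eqF.
exists ((c0 / (n2 r)%:C%C)^* *: r) => y c hyc.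
have hP := Pl (- (c / c0)) _ _ _ _ hy0 hyc.
have hz : - (c / c0) * c0 + c = 0 by field.
rewrite hz in hP.
have h1 := ho _ hP.
rewrite (ipC hV) (ipD hV) (ipZ hV) hy0r in h1.
have h2 : ip y r = c / c0 * (n2 r)%:C%C.
  have : (- (c / c0) * (n2 r)%:C%C + ip y r) = 0.
    by move/eqP: h1; rewrite conjC_eq0 => /eqP.
  move/eqP; rewrite addrC addr_eq0 => /eqP ->; ring.
rewrite (ipZ2 hV) conjCK h2; field.
by apply/andP.
Qed.
End Gen4.
Section Prod.
Variables (R : realType) (K H : lmodType R[i]).
Variables (ipK : K -> K -> R[i]) (ipH : H -> H -> R[i]).
Hypotheses (hK : is_hilbert ipK) (hH : is_hilbert ipH).
Local Notation C := R[i].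

Definition ipP (u v : K * H) : C := ipK u.1 v.1 + ipH u.2 v.2.

Lemma ipPxx u : ipP u u = (n2 ipK u.1 + n2 ipH u.2)%:C%C.
Proof. by rewrite /ipP (ipxx hK) (ipxx hH) rmorphD. Qed.

Lemma n2P u : n2 ipP u = n2 ipK u.1 + n2 ipH u.2.
Proof. by rewrite /n2 -/(ipP u u) ipPxx. Qed.

Lemma n2P_ge0 u : 0 <= n2 ipP u.
Proof. by rewrite n2P addr_ge0 // n2_ge0. Qed.

Lemma hilbertP : is_hilbert ipP.
Proof.
split.
- by move=> x y; rewrite /ipP rmorphD /= -!ipC.
- by move=> a x y z; rewrite /ipP /= (ip_linear hK) (ip_linear hH); ring.
- by move=> x; rewrite ipPxx ler0c addr_ge0 // n2_ge0.
- move=> [x1 x2]; rewrite ipPxx /= => h.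
  have h0 : n2 ipK x1 + n2 ipH x2 = 0 by case: h.
  have a1 := n2_ge0 hK x1; have a2 := n2_ge0 hH x2.
  have e1 : n2 ipK x1 = 0 by lra.
  have e2 : n2 ipH x2 = 0 by lra.
  by rewrite (n2_eq0 hK e1) (n2_eq0 hH e2).
- move=> u hu.
  have hu1 : hcauchy ipK (fun n => (u n).1).
    move=> ee hee; have [N hN] := hu ee hee; exists N => n m hn hm.
    apply: le_lt_trans (hN n m hn hm); rewrite /hnorm ler_sqrt; last exact: n2P_ge0.
    rewrite -/(n2 ipK _) -/(n2 ipP _) n2P /=; have := n2_ge0 hH ((u n).2 - (u m).2); lra.
  have hu2 : hcauchy ipH (fun n => (u n).2).
    move=> ee hee; have [N hN] := hu ee hee; exists N => n m hn hm.
    apply: le_lt_trans (hN n m hn hm); rewrite /hnorm ler_sqrt; last exact: n2P_ge0.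
    rewrite -/(n2 ipH _) -/(n2 ipP _) n2P /=; have := n2_ge0 hK ((u n).1 - (u m).1); lra.
  have [l1 hl1] := ip_complete hK hu1.
  have [l2 hl2] := ip_complete hH hu2.
  exists (l1, l2) => e he.
  have he2 : 0 < e / 2 by rewrite divr_gt0.
  have [N1 hN1] := hl1 _ he2; have [N2 hN2] := hl2 _ he2.
  exists (maxn N1 N2) => n hn.
  have h1 := hN1 n (leq_trans (leq_maxl _ _) hn).
  have h2 := hN2 n (leq_trans (leq_maxr _ _) hn).
  rewrite /hnorm -/(n2 ipK _) lt_sqrt // in h1; last exact: n2_ge0.
  rewrite /hnorm -/(n2 ipH _) lt_sqrt // in h2; last exact: n2_ge0.
  rewrite /hnorm -/(n2 ipP _) lt_sqrt //; last exact: n2P_ge0.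
  rewrite n2P /=.
  move: h1 h2; rewrite (_ : (e / 2) ^+ 2 = e ^+ 2 / 4); last by field.
  set a := n2 ipK _; set b := n2 ipH _ => h1 h2.
  have := exprn_gt0 2 he; lra.
Qed.
End Prod.
Lemma sq_lt_lt (R : realType) (r e : R) : 0 <= r -> 0 < e -> r ^+ 2 < e ^+ 2 -> r < e.
Proof. move=> hr he h; nra. Qed.

Lemma vecid (R : realType) (V : lmodType R[i]) (a c : R[i]) (f1 g1 f2 g2 : V) :
  (a *: f1 + f2, (a *: g1 + g2) - c *: (a *: f1 + f2)).2 =
  a *: (g1 - c *: f1) + (g2 - c *: f2).
Proof.
rewrite /= scalerDr !scalerBr !scalerA mulrC.
by rewrite opprD addrACA.
Qed.

Unset Implicit Arguments.
Local Open Scope classical_set_scope.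
Theorem theorem3p1 (R : realType)
  (H : lmodType R[i]) (ipH : H -> H -> R[i]) (hH : is_hilbert ipH)
  (K : lmodType R[i]) (ipK : K -> K -> R[i]) (hK : is_hilbert ipK)
  (S : set (H * H)) (hS : linrel S) (gamma : R) (hgamma : semibounded_lb ipH S gamma)
  (c : R) (hc : c <= gamma) (Q : H -> K) (hQ : representing_map ipH ipK S c Q) :
  let J := companion S c Q in
  [/\ lr_mul J = lr_ran (lr_shift S c) `&` lr_mul (lr_adj ipH ipH S),
      (forall psi' : H,
         lr_mul (lr_adj ipH ipK (lr_adj ipK ipH J)) psi' <->
         exists u : nat -> H * H, (forall n, S (u n)) /\
           hcvg ipH (fun n => (u n).2 - c%:C%C *: (u n).1) psi' /\
           ccvg (fun n => ipH ((u n).2 - c%:C%C *: (u n).1) (u n).1) 0) &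
      (forall psi' : H,
         lr_dom (lr_adj ipK ipH J) psi' <->
         exists Cpsi : R, forall phi phi', lr_shift S c (phi, phi') ->
           `|ipH phi' psi'| ^+ 2 <= Cpsi%:C%C * ipH phi' phi)].
Proof.
move=> J; rewrite /J {J}.
have [Ql Qip] := hQ.
have [S0 Sl] := hS.
have dom f g : S (f, g) -> lr_dom S f by move=> h; exists g.
have key f g h : S (f, g) -> lr_dom S h ->
    ipH (g - c%:C%C *: f) h = ipK (Q f) (Q h).
  move=> hfg hh; rewrite (ipB hH) (ipZ hH) (Qip _ _ _ hfg hh); ring.
have keyn f g : S (f, g) -> ipH (g - c%:C%C *: f) f = (n2 ipK (Q f))%:C%C.
  by move=> hfg; rewrite (key _ _ _ hfg (dom _ _ hfg)) (ipxx hK).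
have Q0 : Q 0 = 0.
  have h := Ql 1 0 0 (dom _ _ S0) (dom _ _ S0).
  rewrite !scale1r addr0 in h.
  by apply: (addrI (Q 0)); rewrite addr0 -h.
have QL a f1 g1 f2 g2 : S (f1, g1) -> S (f2, g2) ->
    Q (a *: f1 + f2) = a *: Q f1 + Q f2.
  by move=> h1 h2; apply: Ql; [exact: dom h1 | exact: dom h2].
have J0 : companion S c Q (0, 0).
  by exists 0, 0; split=> //; rewrite Q0 scaler0 subr0.
have Jl a y1 z1 y2 z2 : companion S c Q (y1, z1) -> companion S c Q (y2, z2) ->
    companion S c Q (a *: y1 + y2, a *: z1 + z2).
  move=> [f1 [g1 [h1 e1]]] [f2 [g2 [h2 e2]]]; case: e1 => -> ->; case: e2 => -> ->.
  exists (a *: f1 + f2), (a *: g1 + g2); split; first exact: Sl.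
  by rewrite (QL _ _ _ _ _ h1 h2) -(vecid a c%:C%C f1 g1 f2 g2).
split.
- apply/seteqP; split=> h.
    move=> [f [g [hfg e]]]; case: e => eQ eh.
    split.
      by exists f; exists f, g; split=> //; rewrite eh.
    move=> f0 g0 hfg0 /=.
    rewrite (ip0l hH) eh (key _ _ _ hfg (dom _ _ hfg0)) -eQ.
    exact: (ip0l hK).
  move=> [[f' [f [g [hfg e]]]] hadj]; case: e => ef eh.
  exists f, g; split=> //; rewrite -eh.
  have := hadj f g hfg; rewrite /= (ip0l hH) eh (keyn _ _ hfg) => h0.
  have h1 : n2 ipK (Q f) = 0 by case: h0.
  by rewrite (n2_eq0 hK h1).
- have hP := hilbertP hK hH.
  have Jl' a (y1 y2 : K * H) : companion S c Q y1 -> companion S c Q y2 ->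
      companion S c Q (a *: y1 + y2).
    by case: y1 => y1 z1; case: y2 => y2 z2; exact: Jl.
  move=> psi'; split.
  + move=> hmul.
    set x : K * H := (0, psi').
    have [w [p [hw [hp ho]]]] := proj hP J0 Jl' x.
    have hJs : lr_adj ipK ipH (companion S c Q) ((x - p).2, - (x - p).1).
      move=> f g hfg /=.
      have := ho _ hfg; rewrite /ipP /= (ipN hK) => h.
      by move/eqP: h; rewrite addr_eq0 => /eqP ->; rewrite opprK.
    have hB := hmul _ _ hJs; rewrite /= (ip0l hK) in hB.
    have hC n : ipP ipK ipH (w n) (p - x) = 0.
      by rewrite (ipC hP) -opprB (ipN hP) (ho _ (hw n)) oppr0 conjC0.
    have hD : ipP ipK ipH p (p - x) = 0 := lim_orth hP hp hC.
    have hE : ipP ipK ipH x (p - x) = 0.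
      rewrite /ipP /= (ip0l hK) add0r.
      by rewrite -opprB (ipN2 hH) hB oppr0.
    have hpx : p = x.
      apply/eqP; rewrite -subr_eq0; apply/eqP; apply: (n2_eq0 hP).
      by rewrite /n2 (ipB hP) hD hE subr0.
    rewrite hpx in hp.
    have hu n : exists fg : H * H, S fg /\ w n = (Q fg.1, fg.2 - c%:C%C *: fg.1).
      by have [f [g [hfg e]]] := hw n; exists (f, g).
    case: (choice hu) => u hu'.
    exists u; split; first by move=> n; exact: (hu' n).1.
    have hn n : n2 (ipP ipK ipH) (w n - x) =
        n2 ipK (Q (u n).1) + n2 ipH ((u n).2 - c%:C%C *: (u n).1 - psi').
      by rewrite (n2P hK hH) (hu' n).2 /= subr0.
    split.
      apply/(hcvgE hH) => e he.
      have [N hN] := (hcvgE hP w x).1 hp e he.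
      exists N => n hnN; have := hN n hnN; rewrite hn.
      have := n2_ge0 hK (Q (u n).1); lra.
    move=> e he.
    have [N hN] := (hcvgE hP w x).1 hp e he.
    exists N => n hnN; have := hN n hnN; rewrite hn.
    have hs : S ((u n).1, (u n).2) by case: (hu' n) => + _; case: (u n).
    rewrite subr0 (keyn _ _ hs) normC_lt // sq_real.
    have := n2_ge0 hK (Q (u n).1); have := n2_ge0 hH ((u n).2 - c%:C%C *: (u n).1 - psi').
    set a := n2 ipK _; set b := n2 ipH _ => h1 h2 h3.
    nra.
  + move=> [u [hS' [hcv hcc]]] h k hadj /=.
    rewrite (ip0l hK) (ipC hH); apply/eqP; rewrite conjC_eq0; apply/eqP.
    apply: sq_eq0; apply: small0; first exact: sq_ge0.
    move=> e he.
    set B1 := n2 ipK k + 1; set B2 := n2 ipH h + 1.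
    have hB1 : 0 < B1 by rewrite /B1 ltr_wpDl // n2_ge0.
    have hB2 : 0 < B2 by rewrite /B2 ltr_wpDl // n2_ge0.
    have he1 : 0 < e / (4 * B1) by rewrite divr_gt0 // mulr_gt0.
    have he2 : 0 < e / (4 * B2) by rewrite divr_gt0 // mulr_gt0.
    have [N1 hN1] := hcc _ he1.
    have [N2 hN2] := (hcvgE hH _ _).1 hcv _ he2.
    set n := maxn N1 N2.
    have h1 := hN1 n (leq_maxl _ _).
    have h2 := hN2 n (leq_maxr _ _).
    have hs : S ((u n).1, (u n).2) by case: (u n) (hS' n).
    set f := (u n).1 in h1 h2 hs *; set g := (u n).2 in h1 h2 hs *.
    rewrite subr0 (keyn _ _ hs) normC_lt // sq_real in h1.
    have ha := n2_ge0 hK (Q f).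
    have h1' : n2 ipK (Q f) < e / (4 * B1) by apply: sq_lt_lt.
    have hJ : companion S c Q (Q f, g - c%:C%C *: f) by exists f, g.
    have hk := hadj _ _ hJ; rewrite /= in hk.
    have -> : psi' = (g - c%:C%C *: f) + (psi' - (g - c%:C%C *: f)) by rewrite addrC subrK.
    rewrite (ipD2 hH) -hk.
    apply: le_trans (sq_add _ _) _.
    have c1 := CS hK k (Q f).
    have c2 := CS hH h (psi' - (g - c%:C%C *: f)).
    rewrite (n2_sym hH) in c2.
    rewrite ltr_pdivlMr ?mulr_gt0 // in h1'.
    rewrite ltr_pdivlMr ?mulr_gt0 // in h2.
    have hk0 := n2_ge0 hK k; have hh0 := n2_ge0 hH h.
    have hq0 := n2_ge0 hH (g - c%:C%C *: f - psi').
    rewrite /B1 in h1'; rewrite /B2 in h2.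
    set a := n2 ipK (Q f) in ha h1' c1 *.
    set q := n2 ipH (g - c%:C%C *: f - psi') in hq0 h2 c2 *.
    set nk := n2 ipK k in hk0 h1' c1 *.
    set nh := n2 ipH h in hh0 h2 c2 *.
    nra.
- move=> psi'; split.
    move=> [k hk].
    exists (n2 ipK k) => phi phi' [f [g [hfg e]]]; case: e => -> ->.
    have hJ : companion S c Q (Q f, g - c%:C%C *: f) by exists f, g.
    have hk1 := hk _ _ hJ; rewrite /= in hk1.
    rewrite (keyn _ _ hfg) normC_sq (ipC hH) -hk1 -(ipC hK) -rmorphM lecR mulrC.
    exact: (CS hK).
  move=> [C0 hC].
  pose P : set (K * R[i]) := fun mc =>
    exists f g, S (f, g) /\ mc = (Q f, ipH (g - c%:C%C *: f) psi').
  have P0 : P (0, 0) by exists 0, 0; split=> //; rewrite Q0 scaler0 subr0 (ip0l hH).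
  have Pl a m1 c1 m2 c2 : P (m1, c1) -> P (m2, c2) -> P (a *: m1 + m2, a * c1 + c2).
    move=> [f1 [g1 [h1 e1]]] [f2 [g2 [h2 e2]]]; case: e1 => -> ->; case: e2 => -> ->.
    exists (a *: f1 + f2), (a *: g1 + g2); split; first exact: Sl.
    by rewrite (QL _ _ _ _ _ h1 h2) -(ip_linear hH) -(vecid a c%:C%C f1 g1 f2 g2).
  have hB m c1 : P (m, c1) -> sq c1 <= C0 * n2 ipK m.
    move=> [f [g [hfg e]]]; case: e => -> ->.
    have hs : lr_shift S c (f, g - c%:C%C *: f) by exists f, g.
    by have := hC _ _ hs; rewrite normC_sq (keyn _ _ hfg) -rmorphM lecR.
  have [k hk] := riesz hK P0 Pl hB.
  exists k => y z [f [g [hfg e]]]; case: e => -> -> /=.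
  have hP : P (Q f, ipH (g - c%:C%C *: f) psi') by exists f, g.
  have h := hk _ _ hP.
  by rewrite (ipC hK) h -(ipC hH).
Qed.
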